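(* Let $I=[x_1,x_N]$ with partition $x_1<\dots<x_N$ and affine maps $u_i(x)=a_ix+b_i$ with $u_i(x_1)=x_i$, $u_i(x_N)=x_{i+1}$ ($i\in\mathbb{N}_{N-1}$). Let $f,g\in C(I)$ with $f\ge g$ on $I$, and let $\{q_n\}$ be a sequence in $(0,1]$ with $\lim q_n=1$. Set $\phi(f-g,i)=\min_{x\in I}(f-g)(u_i(x))$ and $\Phi_n(f-g)=\max_{x\in I}M_{n,q_n}(f-g)(x)$. Suppose the continuous scaling functions satisfy $\|\alpha\|_\infty<1$ and, for all $n\in\mathbb{N}$, $i\in\mathbb{N}_{N-1}$, $x\in I$, \[ 0\le\alpha_i(x)\le\min\left\{\frac{\phi(f-g,i)}{\Phi_n(f-g)},1\right\}. \] Then the quantum MKZ-fractal functions $f^{(q_n,\alpha)}_n$ and $g^{(q_n,\alpha)}_n$ converge uniformly to $f$ and $g$ respectively, and $f^{(q_n,\alpha)}_n\ge g^{(q_n,\alpha)}_n$ on $I$ for all $n$.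
   Context: For $q\in(0,1]$: $[k]_q=\frac{1-q^k}{1-q}$ ($q\ne1$), $[k]_1=k$, $q$-factorials, $\binom{n}{k}_q=\frac{[n]_q!}{[k]_q![n-k]_q!}$. Quantum MKZ operator: $M_{n,q}h(x)=P_{n,q}(x)\sum_{k\ge0}\binom{n+k}{k}_q\left(\frac{x-x_1}{x_N-x_1}\right)^k h\!\left(x_1+(x_N-x_1)\frac{[k]_q}{[k+n]_q}\right)$ for $x_1\le x<x_N$, $M_{n,q}h(x_N)=h(x_N)$, $P_{n,q}(x)=\prod_{j=0}^n(x_N-x_1-q^j(x-x_1))/(x_N-x_1)^{n+1}$. $\|\alpha\|_\infty=\max_i\|\alpha_i\|_\infty$. The quantum MKZ-fractal function $h^{(q,\alpha)}_n$ of $h\in C(I)$ is the unique $G\in C(I)$ with $G(u_i(x))=h(u_i(x))+\alpha_i(x)(G(x)-M_{n,q}h(x))$ for all $x\in I$, $i\in\mathbb{N}_{N-1}$. *)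

(* Defs.v *)
From Stdlib Require Import Reals Lra.
From Coquelicot Require Import Coquelicot.
Open Scope R_scope.

Definition qint (q : R) (k : nat) : R :=
  if Req_EM_T q 1 then INR k else (1 - q ^ k) / (1 - q).

Fixpoint qfact (q : R) (k : nat) : R :=
  match k with
  | O => 1
  | S k' => qfact q k' * qint q (S k')
  end.

Definition qbinom (q : R) (n k : nat) : R :=
  qfact q n / (qfact q k * qfact q (n - k)).

Fixpoint prod_upto (n : nat) (F : nat -> R) : R :=
  match n with
  | O => F O
  | S n' => prod_upto n' F * F (S n')
  end.

Definition Pq (x1 xN : R) (n : nat) (q : R) (x : R) : R :=
  prod_upto n (fun j => xN - x1 - q ^ j * (x - x1)) / (xN - x1) ^ (n + 1).

Definition MKZ (x1 xN : R) (n : nat) (q : R) (h : R -> R) (x : R) : R :=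
  if Rlt_dec x xN then
    Pq x1 xN n q x *
    Series (fun k => qbinom q (n + k) k * ((x - x1) / (xN - x1)) ^ k
                     * h (x1 + (xN - x1) * (qint q k / qint q (k + n))))
  else h xN.

Definition inI (x1 xN x : R) : Prop := x1 <= x <= xN.

Definition cont_on (x1 xN : R) (h : R -> R) : Prop :=
  forall x, inI x1 xN x ->
    filterlim h (within (inI x1 xN) (locally x)) (locally (h x)).

(* min_{x in I} k(x) and max_{x in I} k(x) (as inf / sup, attained for continuous k) *)
Definition minI (x1 xN : R) (k : R -> R) : R :=
  real (Glb_Rbar (fun y => exists x, inI x1 xN x /\ y = k x)).
Definition maxI (x1 xN : R) (k : R -> R) : R :=
  real (Lub_Rbar (fun y => exists x, inI x1 xN x /\ y = k x)).

(* G is the quantum MKZ-fractal function h_n^{(q,alpha)} for the IFS u_i(x) = a_i x + b_i,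
   i in N_{N-1} = {1,...,N-1}: the (unique) G in C(I) satisfying the self-referential equation *)
Definition is_qMKZ_fractal (x : nat -> R) (N : nat) (a b : nat -> R)
    (alpha : nat -> R -> R) (n : nat) (q : R) (h G : R -> R) : Prop :=
  cont_on (x 1%nat) (x N) G /\
  forall (i : nat) (t : R), (1 <= i <= N - 1)%nat -> inI (x 1%nat) (x N) t ->
    G (a i * t + b i) = h (a i * t + b i)
       + alpha i t * (G t - MKZ (x 1%nat) (x N) n q h t).

(* Main.v *)
Require Import Defs.
From Stdlib Require Import Reals Lra Lia.
From Coquelicot Require Import Coquelicot.
Open Scope R_scope.


Lemma qint_0 q : qint q 0 = 0.
Proof. unfold qint; destruct (Req_EM_T q 1); simpl; [reflexivity|]. field. lra. Qed.

Lemma qint_S q k : qint q (S k) = 1 + q * qint q k.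
Proof. unfold qint; destruct (Req_EM_T q 1) as [e|e].
- subst. rewrite S_INR. ring.
- simpl. field. intro h. apply e. lra. Qed.

Lemma qint_1 q : qint q 1 = 1.
Proof. rewrite qint_S, qint_0. ring. Qed.

Lemma qint_add q k m : qint q (k + m) = qint q k + q ^ k * qint q m.
Proof. induction k; simpl.
- rewrite qint_0. ring.
- rewrite !qint_S, IHk. ring. Qed.

Lemma qint_nonneg q k : 0 < q -> 0 <= qint q k.
Proof. intros hq; induction k. rewrite qint_0; lra. rewrite qint_S. nra. Qed.

Lemma qint_ge1 q k : 0 < q -> 1 <= qint q (S k).
Proof. intros hq; rewrite qint_S. pose proof (qint_nonneg q k hq). nra. Qed.

Lemma qint_pos q k : 0 < q -> (1 <= k)%nat -> 0 < qint q k.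
Proof. intros hq hk. destruct k. lia. pose proof (qint_ge1 q k hq). lra. Qed.

Lemma qint_mono q k m : 0 < q -> (k <= m)%nat -> qint q k <= qint q m.
Proof. intros hq hkm. replace m with (k + (m - k))%nat by lia.
rewrite qint_add. pose proof (qint_nonneg q (m-k) hq). pose proof (pow_lt q k hq). nra. Qed.

Lemma qint_geom q m : qint q m * (1 - q) = 1 - q ^ m.
Proof. induction m; simpl. rewrite qint_0; ring.
rewrite qint_S. replace ((1 + q * qint q m) * (1 - q)) with ((1-q) + q * (qint q m * (1-q))) by ring.
rewrite IHm. ring. Qed.

Lemma pow_le1' q m : 0 <= q <= 1 -> q ^ m <= 1.
Proof. intros h; induction m; simpl. lra. pose proof (pow_le q m (proj1 h)). nra. Qed.

Lemma qint_low q m : 0 < q <= 1 -> INR m * q ^ m <= qint q m.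
Proof. intros hq. induction m. simpl. rewrite qint_0. lra.
rewrite qint_S, S_INR. simpl.
assert (q * q ^ m <= 1). { replace (q * q^m) with (q^(S m)) by reflexivity.
  apply pow_le1'; lra. }
pose proof (pos_INR m). nra. Qed.

Lemma qfact_pos q k : 0 < q -> 0 < qfact q k.
Proof. intros hq; induction k; simpl. lra. pose proof (qint_ge1 q k hq). nra. Qed.

Lemma qbinom_eq q n k : qbinom q (n + k) k = qfact q (n + k) / (qfact q k * qfact q n).
Proof. unfold qbinom. replace (n + k - k)%nat with n by lia. reflexivity. Qed.

Definition cf q n k := qbinom q (n + k) k.
Definition tt q n k := qint q k / qint q (k + n).

Lemma cf_pos q n k : 0 < q -> 0 < cf q n k.
Proof. intros hq. unfold cf. rewrite qbinom_eq.
pose proof (qfact_pos q (n+k) hq). pose proof (qfact_pos q k hq). pose proof (qfact_pos q n hq).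
apply Rdiv_lt_0_compat; [lra| nra]. Qed.

Lemma cf_0 q n : 0 < q -> cf q n 0 = 1.
Proof. intros hq. unfold cf. rewrite qbinom_eq. replace (n+0)%nat with n by lia. simpl.
pose proof (qfact_pos q n hq). field. lra. Qed.

Lemma cf_pascal q m k : 0 < q ->
  cf q (S m) (S k) = cf q (S m) k + q ^ (S k) * cf q m (S k).
Proof. intros hq. unfold cf. rewrite !qbinom_eq.
set (A := qfact q (S (m + k))).
replace (S m + S k)%nat with (S (S (m + k))) by lia.
replace (S m + k)%nat with (S (m + k)) by lia.
replace (m + S k)%nat with (S (m + k)) by lia.
assert (E : qint q (S (S (m + k))) = qint q (S k) + q ^ (S k) * qint q (S m)).
{ rewrite <- qint_add. f_equal. lia. }
change (qfact q (S (S (m + k)))) with (A * qint q (S (S (m + k)))).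
change (qfact q (S k)) with (qfact q k * qint q (S k)).
change (qfact q (S m)) with (qfact q m * qint q (S m)).
fold A. rewrite E.
pose proof (qfact_pos q k hq). pose proof (qfact_pos q m hq).
pose proof (qint_ge1 q k hq). pose proof (qint_ge1 q m hq).
field. repeat split; lra. Qed.

Lemma cf_tt q n k : 0 < q -> cf q n (S k) * tt q n (S k) = cf q n k.
Proof. intros hq. unfold cf, tt. rewrite !qbinom_eq.
replace (n + S k)%nat with (S (n + k)) by lia.
replace (S k + n)%nat with (S (n + k)) by lia.
change (qfact q (S (n + k))) with (qfact q (n + k) * qint q (S (n + k))).
change (qfact q (S k)) with (qfact q k * qint q (S k)).
pose proof (qfact_pos q k hq). pose proof (qfact_pos q n hq).
pose proof (qint_ge1 q k hq). pose proof (qint_ge1 q (n+k) hq).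
field. repeat split; lra. Qed.

Lemma tt_0 q n : tt q n 0 = 0.
Proof. unfold tt. rewrite qint_0. unfold Rdiv. ring. Qed.

Lemma tt_bounds q n k : 0 < q -> (1 <= n)%nat -> 0 <= tt q n k < 1.
Proof. intros hq hn. unfold tt.
pose proof (qint_nonneg q k hq). pose proof (qint_pos q (k+n) hq ltac:(lia)).
rewrite qint_add. pose proof (qint_pos q n hq hn). pose proof (pow_lt q k hq).
split. apply Rdiv_le_0_compat; nra.
rewrite qint_add in H0. apply Rmult_lt_reg_r with (qint q k + q ^ k * qint q n). lra.
unfold Rdiv. rewrite Rmult_assoc, Rinv_l by lra. nra. Qed.

Lemma tt_step q n k : 0 < q <= 1 -> (1 <= n)%nat ->
  tt q n (S k) <= / qint q (S n) + tt q n k.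
Proof. intros hq hn. unfold tt.
replace (S k + n)%nat with (S (k + n)) by lia. rewrite !qint_S.
pose proof (qint_nonneg q k (proj1 hq)). pose proof (qint_pos q (k+n) (proj1 hq) ltac:(lia)).
pose proof (qint_mono q n (k+n) (proj1 hq) ltac:(lia)). pose proof (qint_nonneg q n (proj1 hq)).
assert (/ (1 + q * qint q (k + n)) <= / (1 + q * qint q n)).
{ apply Rinv_le_contravar; nra. }
assert (q * qint q k / (1 + q * qint q (k + n)) <= qint q k / qint q (k + n)).
{ unfold Rdiv. apply Rmult_le_reg_r with ((1 + q * qint q (k + n)) * qint q (k+n)). nra.
  field_simplify; try lra. nra. }
replace ((1 + q * qint q k) / (1 + q * qint q (k + n))) with
  (/ (1 + q * qint q (k + n)) + q * qint q k / (1 + q * qint q (k + n))) by (field; nra).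
lra. Qed.


Definition Qp q n y := prod_upto n (fun j => 1 - q ^ j * y).
Definition aa q n y k := cf q n k * y ^ k.

Lemma prod_upto_shift n F : prod_upto (S n) F = F 0%nat * prod_upto n (fun j => F (S j)).
Proof. induction n. simpl. ring. change (prod_upto (S (S n)) F) with (prod_upto (S n) F * F (S (S n))).
rewrite IHn. simpl. ring. Qed.

Lemma prod_upto_ext n F G : (forall j, (j <= n)%nat -> F j = G j) -> prod_upto n F = prod_upto n G.
Proof. induction n; intros h; simpl. apply h; lia. rewrite IHn, h; auto; intros; apply h; lia. Qed.

Lemma Qp_pos q n y : 0 < q <= 1 -> 0 <= y < 1 -> 0 < Qp q n y.
Proof. intros hq hy. unfold Qp. induction n; simpl. lra.
apply Rmult_lt_0_compat; auto. assert (q * q ^ n <= 1) by (apply (pow_le1' q (S n)); lra).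
pose proof (pow_le q (S n) ltac:(lra)). simpl in H0. nra. Qed.

Lemma Qp_S q m y : Qp q (S m) y = (1 - y) * Qp q m (q * y).
Proof. unfold Qp. rewrite prod_upto_shift. f_equal. simpl. ring.
apply prod_upto_ext. intros. simpl. ring. Qed.

Lemma sumR_S (a : nat -> R) K : sum_n a (S K) = sum_n a K + a (S K).
Proof. rewrite !sum_n_Reals. reflexivity. Qed.
Lemma sumR_0 (a : nat -> R) : sum_n a 0 = a 0%nat.
Proof. rewrite sum_n_Reals. reflexivity. Qed.

Lemma sum_nonneg_incr (a : nat -> R) : (forall k, 0 <= a k) -> forall K, sum_n a K <= sum_n a (S K).
Proof. intros h K. rewrite sumR_S. specialize (h (S K)). lra. Qed.

Lemma aa_nonneg q n y k : 0 < q -> 0 <= y -> 0 <= aa q n y k.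
Proof. intros. unfold aa. pose proof (cf_pos q n k H). pose proof (pow_le y k H0). nra. Qed.

Lemma cf_zero q k : 0 < q -> cf q 0 k = 1.
Proof. intros hq. unfold cf. rewrite qbinom_eq. simpl. pose proof (qfact_pos q k hq). field. lra. Qed.

Lemma aa_series q n y : 0 < q <= 1 -> 0 <= y < 1 -> is_series (aa q n y) (/ Qp q n y).
Proof. intros hq. revert y. induction n; intros y hy.
- unfold Qp; simpl. replace (1 - 1 * y) with (1 - y) by ring.
  apply (is_series_ext (fun k => y ^ k)). intros k. unfold aa. rewrite cf_zero by lra. rewrite Rmult_1_l. reflexivity.
  apply is_series_geom. rewrite Rabs_pos_eq; lra.
- assert (hy' : 0 <= q * y < 1) by nra.
  specialize (IHn (q*y) hy').
  set (u := sum_n (aa q (S n) y)). set (v := sum_n (aa q n (q*y))).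
  set (L := / Qp q n (q * y)).
  assert (rec : forall K, u (S K) = y * u K + v (S K)).
  { induction K.
    - unfold u, v. rewrite !sumR_S, !sumR_0. unfold aa. rewrite cf_pascal by lra.
      rewrite !cf_0 by lra. simpl. ring.
    - unfold u, v in *. rewrite !(sumR_S (aa q (S n) y) (S K)), (sumR_S (aa q n (q*y)) (S K)).
      rewrite (sumR_S (aa q (S n) y) K) in IHK |- *.
      unfold aa at 3. rewrite cf_pascal by lra.
      replace (aa q (S n) y (S K)) with (cf q (S n) (S K) * y ^ S K) by reflexivity.
      replace (aa q n (q * y) (S (S K))) with (cf q n (S (S K)) * (q*y) ^ S (S K)) by reflexivity.
      rewrite Rpow_mult_distr.
      replace (y ^ S (S K)) with (y * y ^ S K) by reflexivity. change (aa q (S n) y (S K)) with (cf q (S n) (S K) * y ^ S K) in IHK. nra. }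
  assert (vinc : forall K, v K <= v (S K)) by (apply sum_nonneg_incr; intros; apply aa_nonneg; lra).
  assert (uinc : forall K, u K <= u (S K)) by (apply sum_nonneg_incr; intros; apply aa_nonneg; lra).
  assert (vle : forall K, v K <= L) by (apply is_lim_seq_incr_compare; auto).
  assert (v0 : v 0%nat = 1) by (unfold v; rewrite sumR_0; unfold aa; rewrite cf_0; simpl; lra).
  assert (u0 : u 0%nat = 1) by (unfold u; rewrite sumR_0; unfold aa; rewrite cf_0; simpl; lra).
  assert (hL : 1 <= L) by (rewrite <- v0; apply vle).
  assert (ule : forall K, u K <= L / (1 - y)).
  { induction K. rewrite u0. apply Rmult_le_reg_r with (1-y). lra.
    unfold Rdiv. rewrite Rmult_assoc, Rinv_l by lra. nra.
    rewrite rec. specialize (vle (S K)).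
    apply Rmult_le_reg_r with (1-y). lra.
    unfold Rdiv. rewrite Rmult_assoc, Rinv_l by lra.
    assert (y * u K <= y * (L / (1-y))) by (apply Rmult_le_compat_l; lra).
    assert (y * (L/(1-y)) * (1-y) = y * L) by (field; lra). nra. }
  destruct (ex_finite_lim_seq_incr u _ uinc ule) as [U hU].
  assert (h1 : is_lim_seq (fun K => u (S K)) U) by (apply -> is_lim_seq_incr_1; exact hU).
  assert (h2 : is_lim_seq (fun K => y * u K + v (S K)) (y * U + L)).
  { apply is_lim_seq_plus'. apply (is_lim_seq_scal_l u y U hU).
    apply -> is_lim_seq_incr_1. exact IHn. }
  assert (U = y * U + L).
  { apply is_lim_seq_unique in h1. apply is_lim_seq_unique in h2.
    assert (Lim_seq (fun K => u (S K)) = Lim_seq (fun K => y * u K + v (S K))).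
    { apply Lim_seq_ext. intros; apply rec. }
    rewrite h1, h2 in H. injection H. auto. }
  assert (E : / Qp q (S n) y = U).
  { rewrite Qp_S. pose proof (Qp_pos q n (q*y) hq hy'). fold L in H |- *.
    unfold L. field_simplify_eq. 2: split; lra. unfold L in H. 
    apply Rmult_eq_reg_r with (/ Qp q n (q * y)). 2: apply Rinv_neq_0_compat; lra.
    field_simplify; try lra. rewrite H at 2. field. lra. }
  rewrite E. exact hU.
Qed.


Ltac toR := match goal with |- @eq _ ?x ?y => change (@eq R x y) end.

Lemma isR_scal (c : R) (a : nat -> R) l : is_series a l -> is_series (fun n => c * a n) (c * l).
Proof. intros. exact (is_series_scal_l c a l H). Qed.
Lemma isR_decr (a : nat -> R) l : is_series (fun k => a (S k)) (l - a 0%nat) -> is_series a l.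
Proof. intros. exact (is_series_decr_1 a l H). Qed.
Lemma isR_plus (a b : nat -> R) la lb : is_series a la -> is_series b lb -> is_series (fun n => a n + b n) (la + lb).
Proof. intros. exact (is_series_plus a b la lb H H0). Qed.

Lemma exR_plus (a b : nat -> R) : ex_series a -> ex_series b -> ex_series (fun n => a n + b n).
Proof. intros. exact (ex_series_plus a b H H0). Qed.
Lemma exR_scal (c : R) (a : nat -> R) : ex_series a -> ex_series (fun n => c * a n).
Proof. intros. exact (ex_series_scal_l c a H). Qed.
Lemma exR_of (a : nat -> R) l : is_series a l -> ex_series a.
Proof. intros; exists l; auto. Qed.

Lemma sum_le (a b : nat -> R) K : (forall k, a k <= b k) -> sum_n a K <= sum_n b K.
Proof. intros h; induction K. rewrite !sumR_0; auto. rewrite !sumR_S. specialize (h (S K)); lra. Qed.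
Lemma sum_lin (a b : nat -> R) c d K : sum_n (fun k => c * a k + d * b k) K = c * sum_n a K + d * sum_n b K.
Proof. induction K. rewrite !sumR_0; auto. rewrite !sumR_S, IHK. toR. ring. Qed.
Lemma sum_shift (a : nat -> R) K : sum_n a (S K) = a 0%nat + sum_n (fun k => a (S k)) K.
Proof. induction K. rewrite sumR_S, !sumR_0. auto. rewrite sumR_S, IHK, (sumR_S (fun k => a (S k))). toR. ring. Qed.
Lemma psum_le_lim (a : nat -> R) l K : (forall k, 0 <= a k) -> is_series a l -> sum_n a K <= l.
Proof. intros h hl. apply (is_lim_seq_incr_compare (sum_n a) l hl). apply sum_nonneg_incr; auto. Qed.
Lemma series_bound (a : nat -> R) Bd : (forall k, 0 <= a k) -> (forall K, sum_n a K <= Bd) ->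
  ex_series a /\ Series a <= Bd.
Proof. intros h hb. destruct (ex_finite_lim_seq_incr (sum_n a) Bd (sum_nonneg_incr a h) hb) as [l hl].
assert (is_series a l) by exact hl. split. exists l; auto. rewrite (is_series_unique a l H).
pose proof (is_lim_seq_le (sum_n a) (fun _ => Bd) l Bd hb hl (is_lim_seq_const Bd)). simpl in H0. auto. Qed.

Definition a1 q n y k := aa q n y k * tt q n k.
Definition a2 q n y k := aa q n y k * (tt q n k)^2.

Lemma a1_series q n y : 0 < q <= 1 -> 0 <= y < 1 -> is_series (a1 q n y) (y / Qp q n y).
Proof. intros hq hy. apply isR_decr.
assert (a1 q n y 0%nat = 0) by (unfold a1; rewrite tt_0; ring). rewrite H.
apply (is_series_ext (fun k => y * aa q n y k)).
- intros k. unfold a1, aa. rewrite <- (cf_tt q n k) by lra. simpl. ring.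
- replace (y / Qp q n y - 0) with (y * / Qp q n y) by (unfold Rdiv; ring).
  exact (isR_scal y _ _ (aa_series q n y hq hy)). Qed.

Lemma a1_nonneg q n y k : 0 < q <= 1 -> (1 <= n)%nat -> 0 <= y -> 0 <= a1 q n y k.
Proof. intros. unfold a1. pose proof (aa_nonneg q n y k ltac:(lra) H1). pose proof (tt_bounds q n k ltac:(lra) H0). nra. Qed.
Lemma a2_nonneg q n y k : 0 < q <= 1 -> (1 <= n)%nat -> 0 <= y -> 0 <= a2 q n y k.
Proof. intros. unfold a2. pose proof (aa_nonneg q n y k ltac:(lra) H1). pose proof (tt_bounds q n k ltac:(lra) H0). nra. Qed.

Lemma a2_series q n y : 0 < q <= 1 -> (1 <= n)%nat -> 0 <= y < 1 ->
  ex_series (a2 q n y) /\ Series (a2 q n y) <= (y / qint q (S n) + y ^ 2) / Qp q n y.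
Proof. intros hq hn hy. apply series_bound. intros; apply a2_nonneg; auto; lra.
pose proof (Qp_pos q n y hq hy). pose proof (qint_ge1 q n (proj1 hq)).
assert (0 <= (y / qint q (S n) + y ^ 2) / Qp q n y).
{ apply Rdiv_le_0_compat; [|lra]. assert (0 <= y / qint q (S n)) by (apply Rdiv_le_0_compat; lra). nra. }
intros K. destruct K. rewrite sumR_0. unfold a2. rewrite tt_0. simpl. lra.
rewrite sum_shift. unfold a2 at 1. rewrite tt_0.
eapply Rle_trans. apply Rplus_le_compat_l.
apply (sum_le _ (fun k => (y / qint q (S n)) * aa q n y k + y * a1 q n y k)).
- intros k. unfold a2, a1. pose proof (tt_step q n k hq hn).
  pose proof (cf_tt q n k (proj1 hq)). unfold aa. rewrite <- H3. simpl.
  pose proof (cf_pos q n (S k) (proj1 hq)). pose proof (tt_bounds q n (S k) (proj1 hq) hn).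
  pose proof (pow_le y k (proj1 hy)).
  assert (0 <= cf q n (S k) * tt q n (S k) * y ^ k * y) by
    (apply Rmult_le_pos; [apply Rmult_le_pos; [nra|lra]|lra]).
  replace (cf q n (S k) * (y * y ^ k) * (tt q n (S k) * (tt q n (S k) * 1))) with
    ((cf q n (S k) * tt q n (S k) * y ^ k * y) * tt q n (S k)) by ring.
  replace (y / qint q (S n) * (cf q n (S k) * tt q n (S k) * y ^ k) +
           y * (cf q n (S k) * tt q n (S k) * y ^ k * tt q n k)) with
    ((cf q n (S k) * tt q n (S k) * y ^ k * y) * (/ qint q (S n) + tt q n k)) by (unfold Rdiv; ring).
  apply Rmult_le_compat_l; auto.
- rewrite sum_lin.
  pose proof (psum_le_lim (aa q n y) _ K (fun k => aa_nonneg q n y k (proj1 hq) (proj1 hy)) (aa_series q n y hq hy)).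
  pose proof (psum_le_lim (a1 q n y) _ K (fun k => a1_nonneg q n y k hq hn (proj1 hy)) (a1_series q n y hq hy)).
  assert (0 <= y / qint q (S n)) by (apply Rdiv_le_0_compat; lra).
  assert (y / qint q (S n) * sum_n (aa q n y) K <= y / qint q (S n) * / Qp q n y) by (apply Rmult_le_compat_l; auto).
  assert (y * sum_n (a1 q n y) K <= y * (y / Qp q n y)) by (apply Rmult_le_compat_l; lra).
  replace ((y / qint q (S n) + y ^ 2) / Qp q n y) with (y / qint q (S n) * / Qp q n y + y * (y / Qp q n y)) by (field; lra).
  lra.
Qed.


Lemma exR_le (a b : nat -> R) : (forall n, Rabs (a n) <= b n) -> ex_series b -> ex_series a.
Proof. intros. exact (ex_series_le a b H H0). Qed.

Lemma core q n y (h : R -> R) hx eps K B :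
 0 < q <= 1 -> (1 <= n)%nat -> 0 <= y < 1 -> 0 <= eps -> 0 <= K ->
 (forall k, Rabs (h (tt q n k)) <= B) ->
 (forall k, Rabs (h (tt q n k) - hx) <= eps + K * (tt q n k - y)^2) ->
 ex_series (fun k => aa q n y k * h (tt q n k)) /\
 Rabs (Qp q n y * Series (fun k => aa q n y k * h (tt q n k)) - hx) <= eps + K * y / qint q (S n).
Proof.
intros hq hn hy he hK hB hc.
pose proof (Qp_pos q n y hq hy) as hQ.
pose proof (aa_series q n y hq hy) as s0.
pose proof (a1_series q n y hq hy) as s1.
destruct (a2_series q n y hq hn hy) as [e2 b2].
pose proof (Series_correct _ e2) as s2.
assert (ann : forall k, 0 <= aa q n y k) by (intros; apply aa_nonneg; lra).
assert (exh : ex_series (fun k => aa q n y k * h (tt q n k))).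
{ apply (exR_le _ (fun k => B * aa q n y k)).
  intros k. rewrite Rabs_mult, Rabs_pos_eq by auto. rewrite Rmult_comm. apply Rmult_le_compat_r; auto.
  apply exR_scal. exact (exR_of _ _ s0). }
split; auto.
set (w := fun k => aa q n y k * (h (tt q n k) - hx)).
set (E := fun k => eps * aa q n y k + K * a2 q n y k + (-2 * K * y) * a1 q n y k + (K * y ^ 2) * aa q n y k).
set (SE := eps * / Qp q n y + K * Series (a2 q n y) + (-2 * K * y) * (y / Qp q n y) + (K * y ^ 2) * / Qp q n y).
assert (sE : is_series E SE).
{ unfold E, SE. repeat apply isR_plus; apply isR_scal; auto. }
assert (wE : forall k, Rabs (w k) <= E k).
{ intros k. unfold w, E, a1, a2. rewrite Rabs_mult, Rabs_pos_eq by auto.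
  specialize (hc k). specialize (ann k).
  replace (eps * aa q n y k + K * (aa q n y k * tt q n k ^ 2) + -2 * K * y * (aa q n y k * tt q n k) + K * y ^ 2 * aa q n y k)
    with (aa q n y k * (eps + K * (tt q n k - y) ^ 2)) by ring.
  apply Rmult_le_compat_l; auto. }
assert (exE : ex_series E) by exact (exR_of _ _ sE).
assert (exaw : ex_series (fun k => Rabs (w k))).
{ apply (exR_le _ E); auto. intros; rewrite Rabs_Rabsolu; auto. }
assert (bw : Rabs (Series w) <= SE).
{ eapply Rle_trans. apply Series_Rabs; auto. rewrite <- (is_series_unique _ _ sE).
  apply Series_le; auto. intros; split; auto. apply Rabs_pos. }
assert (exw : ex_series w) by (apply ex_series_Rabs; auto).
assert (decomp : Series (fun k => aa q n y k * h (tt q n k)) = Series w + hx * / Qp q n y).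
{ rewrite <- (is_series_unique _ _ s0). rewrite <- Series_scal_l. rewrite <- Series_plus; auto.
  apply Series_ext. intros; unfold w; ring. apply exR_scal. exact (exR_of _ _ s0). }
rewrite decomp.
replace (Qp q n y * (Series w + hx * / Qp q n y) - hx) with (Qp q n y * Series w) by (field; lra).
rewrite Rabs_mult, (Rabs_pos_eq (Qp q n y)) by lra.
apply Rle_trans with (Qp q n y * SE). apply Rmult_le_compat_l; lra.
unfold SE.
assert (Qp q n y * Series (a2 q n y) <= y / qint q (S n) + y ^ 2).
{ apply Rmult_le_reg_r with (/ Qp q n y). apply Rinv_0_lt_compat; lra.
  replace (Qp q n y * Series (a2 q n y) * / Qp q n y) with (Series (a2 q n y)) by (field; lra). exact b2. }
replace (Qp q n y * (eps * / Qp q n y + K * Series (a2 q n y) + -2 * K * y * (y / Qp q n y) + K * y ^ 2 * / Qp q n y))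
  with (eps + K * (Qp q n y * Series (a2 q n y)) - K * y ^ 2) by (field; lra).
assert (K * (Qp q n y * Series (a2 q n y)) <= K * (y / qint q (S n) + y ^ 2)) by (apply Rmult_le_compat_l; auto).
unfold Rdiv in *. lra.
Qed.


Lemma prod_upto_scale n L G : prod_upto n (fun j => L * G j) = L ^ (n + 1) * prod_upto n G.
Proof. induction n; simpl. ring. rewrite IHn. replace (n + 1)%nat with (S n) by lia. simpl. ring. Qed.

Lemma MKZ_eq x1 xN n q h x : x1 < xN -> x1 <= x < xN ->
  MKZ x1 xN n q h x = Qp q n ((x - x1) / (xN - x1)) *
    Series (fun k => aa q n ((x - x1) / (xN - x1)) k * h (x1 + (xN - x1) * tt q n k)).
Proof. intros hI hx. unfold MKZ. destruct (Rlt_dec x xN); [|lra]. f_equal.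
unfold Pq, Qp.
rewrite (prod_upto_ext n _ (fun j => (xN - x1) * (1 - q ^ j * ((x - x1) / (xN - x1))))).
rewrite prod_upto_scale. field. apply pow_nonzero. lra.
intros j _. field. lra. Qed.

Lemma MKZ_xN x1 xN n q h : MKZ x1 xN n q h xN = h xN.
Proof. unfold MKZ. destruct (Rlt_dec xN xN); [lra|auto]. Qed.

Lemma y_range x1 xN x : x1 < xN -> x1 <= x < xN -> 0 <= (x - x1) / (xN - x1) < 1.
Proof. intros. split. apply Rdiv_le_0_compat; lra.
apply Rmult_lt_reg_r with (xN - x1). lra. unfold Rdiv. rewrite Rmult_assoc, Rinv_l by lra. lra. Qed.

Lemma node_in x1 xN q n k : x1 < xN -> 0 < q -> (1 <= n)%nat -> x1 <= x1 + (xN - x1) * tt q n k <= xN.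
Proof. intros. pose proof (tt_bounds q n k H0 H1). nra. Qed.

Lemma MKZ_core x1 xN n q h x eps K B :
  x1 < xN -> 0 < q <= 1 -> (1 <= n)%nat -> x1 <= x < xN -> 0 <= eps -> 0 <= K ->
  (forall s, x1 <= s <= xN -> Rabs (h s) <= B) ->
  (forall t, 0 <= t < 1 -> Rabs (h (x1 + (xN - x1) * t) - h x) <= eps + K * (t - (x - x1) / (xN - x1))^2) ->
  ex_series (fun k => aa q n ((x - x1) / (xN - x1)) k * h (x1 + (xN - x1) * tt q n k)) /\
  Rabs (MKZ x1 xN n q h x - h x) <= eps + K / qint q (S n).
Proof. intros hI hq hn hx he hK hB hc.
pose proof (y_range x1 xN x hI hx) as hy.
destruct (core q n ((x - x1) / (xN - x1)) (fun t => h (x1 + (xN - x1) * t)) (h x) eps K B hq hn hy he hK)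
  as [ex bd].
- intros k. apply hB. apply node_in; auto; lra.
- intros k. apply hc. apply tt_bounds; auto; lra.
- split; auto. rewrite MKZ_eq by auto. eapply Rle_trans. exact bd.
  pose proof (qint_ge1 q n (proj1 hq)).
  assert (K * ((x - x1) / (xN - x1)) <= K) by (rewrite <- (Rmult_1_r K) at 2; apply Rmult_le_compat_l; lra).
  unfold Rdiv. apply Rplus_le_compat_l. apply Rmult_le_compat_r. left; apply Rinv_0_lt_compat; lra.
  unfold Rdiv in H0. exact H0.
Qed.

Lemma MKZ_bound_ex x1 xN n q h B x :
  x1 < xN -> 0 < q <= 1 -> (1 <= n)%nat -> x1 <= x < xN ->
  (forall s, x1 <= s <= xN -> Rabs (h s) <= B) ->
  ex_series (fun k => aa q n ((x - x1) / (xN - x1)) k * h (x1 + (xN - x1) * tt q n k)) /\ Rabs (MKZ x1 xN n q h x) <= B.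
Proof. intros hI hq hn hx hB.
assert (B0 : 0 <= B) by (eapply Rle_trans; [apply Rabs_pos| apply (hB x1); lra]).
pose proof (y_range x1 xN x hI hx) as hy.
destruct (core q n ((x - x1) / (xN - x1)) (fun t => h (x1 + (xN - x1) * t)) 0 B 0 B hq hn hy B0 ltac:(lra))
  as [ex bd].
- intros k. apply hB. apply node_in; auto; lra.
- intros k. rewrite Rminus_0_r. rewrite Rmult_0_l, Rplus_0_r. apply hB. apply node_in; auto; lra.
- split; auto. rewrite MKZ_eq by auto. rewrite Rminus_0_r in bd.
  replace (B + 0 * ((x - x1) / (xN - x1)) / qint q (S n)) with B in bd by (unfold Rdiv; ring). exact bd.
Qed.

Lemma MKZ_bound x1 xN n q h B x :
  x1 < xN -> 0 < q <= 1 -> (1 <= n)%nat -> x1 <= x <= xN ->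
  (forall s, x1 <= s <= xN -> Rabs (h s) <= B) -> Rabs (MKZ x1 xN n q h x) <= B.
Proof. intros hI hq hn hx hB.
destruct (Req_dec x xN). subst. rewrite MKZ_xN. apply hB; lra.
apply (MKZ_bound_ex x1 xN n q h B x); auto. lra. Qed.

Lemma MKZ_minus x1 xN n q f g Bf Bg x :
  x1 < xN -> 0 < q <= 1 -> (1 <= n)%nat -> x1 <= x <= xN ->
  (forall s, x1 <= s <= xN -> Rabs (f s) <= Bf) ->
  (forall s, x1 <= s <= xN -> Rabs (g s) <= Bg) ->
  MKZ x1 xN n q f x - MKZ x1 xN n q g x = MKZ x1 xN n q (fun s => f s - g s) x.
Proof. intros hI hq hn hx hf hg.
destruct (Req_dec x xN). subst. rewrite !MKZ_xN. auto.
assert (hx' : x1 <= x < xN) by lra.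
destruct (MKZ_bound_ex x1 xN n q f Bf x hI hq hn hx' hf) as [ef _].
destruct (MKZ_bound_ex x1 xN n q g Bg x hI hq hn hx' hg) as [eg _].
rewrite !MKZ_eq by auto. rewrite <- Rmult_minus_distr_l. f_equal.
rewrite <- Series_minus by auto. apply Series_ext. intros; ring. Qed.

Lemma MKZ_korovkin x1 xN f B :
  x1 < xN -> (forall s, x1 <= s <= xN -> Rabs (f s) <= B) ->
  (forall eps, 0 < eps -> exists delta, 0 < delta /\ forall u v, x1 <= u <= xN -> x1 <= v <= xN ->
      Rabs (u - v) < delta -> Rabs (f u - f v) <= eps) ->
  forall eps, 0 < eps -> exists K, 0 <= K /\ forall n q x, 0 < q <= 1 -> (1 <= n)%nat -> x1 <= x <= xN ->
    Rabs (MKZ x1 xN n q f x - f x) <= eps + K / qint q (S n).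
Proof. intros hI hB huc eps he.
destruct (huc eps he) as [d [hd hu]].
assert (B0 : 0 <= B) by (eapply Rle_trans; [apply Rabs_pos| apply (hB x1); lra]).
set (L := xN - x1).
exists (2 * B * (L / d) ^ 2). split. assert (0 <= (L/d)^2) by apply pow2_ge_0. nra.
intros n q x hq hn hx.
destruct (Req_dec x xN). subst. rewrite MKZ_xN. rewrite Rminus_diag, Rabs_R0.
  assert (0 <= 2 * B * (L / d) ^ 2 / qint q (S n)). { apply Rdiv_le_0_compat.
  assert (0 <= (L/d)^2) by apply pow2_ge_0. nra. pose proof (qint_ge1 q n (proj1 hq)); lra. } lra.
destruct (MKZ_core x1 xN n q f x eps (2 * B * (L / d) ^ 2) B hI hq hn ltac:(lra) ltac:(lra)) as [_ bd]; auto.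
- assert (0 <= (L/d)^2) by apply pow2_ge_0. nra.
- intros t ht. set (y := (x - x1) / (xN - x1)).
  assert (hxy : x = x1 + (xN - x1) * y) by (unfold y; field; lra).
  assert (hy : 0 <= y < 1) by (apply y_range; lra).
  rewrite hxy at 1.
  destruct (Rlt_dec (Rabs (x1 + (xN - x1) * t - (x1 + (xN - x1) * y))) d) as [lt|ge].
  + eapply Rle_trans. apply hu; auto; nra.
    assert (0 <= 2 * B * (L / d) ^ 2 * (t - y) ^ 2). { apply Rmult_le_pos. assert (0 <= (L/d)^2) by apply pow2_ge_0. nra. apply pow2_ge_0. } lra.
  + apply Rnot_lt_le in ge.
    replace (x1 + (xN - x1) * t - (x1 + (xN - x1) * y)) with (L * (t - y)) in ge by (unfold L; ring).
    rewrite Rabs_mult, (Rabs_pos_eq L) in ge by (unfold L; lra).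
    assert (1 <= (L / d) ^ 2 * (t - y) ^ 2).
    { replace ((L / d) ^ 2 * (t - y) ^ 2) with ((L * Rabs (t - y) / d) ^ 2).
      2: { rewrite <- (pow2_abs (t - y)). field. lra. }
      assert (1 <= L * Rabs (t - y) / d). { apply Rmult_le_reg_r with d; auto. unfold Rdiv. rewrite Rmult_assoc, Rinv_l by lra. lra. }
      nra. }
    assert (Rabs (f (x1 + (xN - x1) * t) - f (x1 + (xN - x1) * y)) <= 2 * B).
    { eapply Rle_trans. apply Rabs_triang. rewrite Rabs_Ropp.
      assert (Rabs (f (x1 + (xN - x1) * t)) <= B) by (apply hB; nra).
      assert (Rabs (f (x1 + (xN - x1) * y)) <= B) by (apply hB; nra). lra. }
    assert (2 * B <= 2 * B * (L / d) ^ 2 * (t - y) ^ 2) by nra. lra.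
Qed.


Definition clamp x1 xN s := Rmax x1 (Rmin xN s).

Lemma clamp_in x1 xN s : x1 <= xN -> inI x1 xN (clamp x1 xN s).
Proof. intros. unfold inI, clamp. split. apply Rmax_l.
apply Rmax_lub; auto. apply Rmin_l. Qed.

Lemma clamp_id x1 xN s : inI x1 xN s -> clamp x1 xN s = s.
Proof. intros [h1 h2]. unfold clamp. rewrite Rmin_right by lra. rewrite Rmax_right; lra. Qed.

Lemma clamp_lip x1 xN a b : x1 <= xN -> Rabs (clamp x1 xN a - clamp x1 xN b) <= Rabs (a - b).
Proof. intros. unfold clamp, Rmax, Rmin.
repeat (destruct Rle_dec); unfold Rabs; repeat destruct Rcase_abs; lra. Qed.

Lemma ext_cont x1 xN h c : x1 <= xN -> cont_on x1 xN h ->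
  continuity_pt (fun s => h (clamp x1 xN s)) c.
Proof. intros hI hc. apply continuity_pt_filterlim.
apply (filterlim_comp _ _ _ (clamp x1 xN) h _ (within (inI x1 xN) (locally (clamp x1 xN c)))).
- intros P [eps hP]. exists eps. intros y hy. apply hP. 2: apply clamp_in; auto.
  change (Rabs (clamp x1 xN y - clamp x1 xN c) < eps).
  eapply Rle_lt_trans. apply clamp_lip; auto. exact hy.
- apply hc. apply clamp_in; auto.
Qed.

Lemma cont_bounded x1 xN h : x1 <= xN -> cont_on x1 xN h ->
  exists B, forall s, x1 <= s <= xN -> Rabs (h s) <= B.
Proof. intros hI hc.
set (he := fun s => h (clamp x1 xN s)).
assert (hce : forall c, x1 <= c <= xN -> continuity_pt he c) by (intros; apply ext_cont; auto).
destruct (continuity_ab_maj he x1 xN hI hce) as [M [hM _]].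
destruct (continuity_ab_min he x1 xN hI hce) as [m [hm _]].
exists (Rmax (Rabs (he M)) (Rabs (he m))). intros s hs.
specialize (hM s hs). specialize (hm s hs). unfold he in *. rewrite (clamp_id x1 xN s) in hM, hm by (unfold inI; lra).
pose proof (Rmax_l (Rabs (h (clamp x1 xN M))) (Rabs (h (clamp x1 xN m)))).
pose proof (Rmax_r (Rabs (h (clamp x1 xN M))) (Rabs (h (clamp x1 xN m)))).
pose proof (Rle_abs (h (clamp x1 xN M))). pose proof (Rabs_maj2 (h (clamp x1 xN m))).
apply Rabs_le. split; lra. Qed.

Lemma cont_unif x1 xN h : x1 <= xN -> cont_on x1 xN h ->
  forall eps, 0 < eps -> exists delta, 0 < delta /\ forall u v, x1 <= u <= xN -> x1 <= v <= xN ->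
      Rabs (u - v) < delta -> Rabs (h u - h v) <= eps.
Proof. intros hI hc eps he.
set (hx := fun s => h (clamp x1 xN s)).
assert (hce : forall c, (fun c => x1 <= c <= xN) c -> continuity_pt hx c) by (intros; apply ext_cont; auto).
destruct (Heine hx _ (compact_P3 x1 xN) hce (mkposreal eps he)) as [d hd].
exists d. split. apply cond_pos. intros u v hu hv huv.
specialize (hd u v hu hv huv). unfold hx in hd. rewrite (clamp_id x1 xN u), (clamp_id x1 xN v) in hd by (unfold inI; lra). simpl in hd. lra. Qed.

Lemma qint_grow (qs : nat -> R) : (forall n, 0 < qs n <= 1) -> is_lim_seq qs 1 ->
  forall K, exists n0, forall n, (n0 <= n)%nat -> K <= qint (qs n) (S n).
Proof. intros hq hl K.
set (K' := Rmax K 1).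
assert (hK' : 1 <= K' /\ K <= K') by (split; [apply Rmax_r|apply Rmax_l]).
apply is_lim_seq_spec in hl.
assert (pe : 0 < / (2 * K')) by (apply Rinv_0_lt_compat; lra).
destruct (hl (mkposreal _ pe)) as [N1 hN1].
destruct (INR_unbounded (2 * K')) as [N2 hN2].
exists (max N1 N2). intros n hn.
specialize (hN1 n ltac:(lia)). simpl in hN1.
specialize (hq n). set (q := qs n) in *.
assert (hm : 2 * K' <= INR (S n)).
{ assert (INR N2 <= INR (S n)) by (apply le_INR; lia). lra. }
assert (geo := qint_geom q (S n)).
assert (low := qint_low q (S n) hq).
destruct (Rle_dec (q ^ S n) (/2)) as [s|s].
- destruct (Req_dec q 1) as [e|e].
  + rewrite e, pow1 in s. lra.
  + assert (h1q : 0 < 1 - q < / (2 * K')). { unfold Rabs in hN1; destruct Rcase_abs in hN1; lra. }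
    assert (qint q (S n) * (1 - q) >= /2) by lra.
    assert (/ (2 * K') * (2 * K') = 1) by (field; lra).
    assert (0 <= qint q (S n)) by (apply qint_nonneg; lra).
    assert (qint q (S n) * / (2 * K') >= /2) by nra.
    assert (qint q (S n) >= K') by nra. lra.
- apply Rnot_le_lt in s. pose proof (pos_INR (S n)). nra.
Qed.


Lemma minI_props x1 xN k t : inI x1 xN t -> (forall s, inI x1 xN s -> 0 <= k s) ->
  0 <= minI x1 xN k <= k t.
Proof. intros ht hk. unfold minI.
destruct (Glb_Rbar_correct (fun y => exists x, inI x1 xN x /\ y = k x)) as [lb glb].
assert (h1 : Rbar_le (Glb_Rbar (fun y => exists x, inI x1 xN x /\ y = k x)) (k t)) by (apply lb; eauto).
assert (h2 : Rbar_le 0 (Glb_Rbar (fun y => exists x, inI x1 xN x /\ y = k x))).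
{ apply glb. intros y [x [hx ->]]. simpl. apply hk; auto. }
destruct (Glb_Rbar _); simpl in *; try contradiction. lra. Qed.

Lemma maxI_ge x1 xN k t B : inI x1 xN t -> (forall s, inI x1 xN s -> k s <= B) ->
  k t <= maxI x1 xN k.
Proof. intros ht hk. unfold maxI.
destruct (Lub_Rbar_correct (fun y => exists x, inI x1 xN x /\ y = k x)) as [ub lub].
assert (h1 : Rbar_le (k t) (Lub_Rbar (fun y => exists x, inI x1 xN x /\ y = k x))) by (apply ub; eauto).
assert (h2 : Rbar_le (Lub_Rbar (fun y => exists x, inI x1 xN x /\ y = k x)) B).
{ apply lub. intros y [x [hx ->]]. simpl. apply hk; auto. }
destruct (Lub_Rbar _); simpl in *; try contradiction. lra. Qed.

Lemma xmono (N : nat) (x : nat -> R) : (forall k : nat, (1 <= k < N)%nat -> x k < x (S k)) ->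
  forall j k, (1 <= j)%nat -> (j <= k)%nat -> (k <= N)%nat -> x j <= x k.
Proof. intros hx j k hj hjk hkN. induction k. lia.
destruct (Nat.eq_dec j (S k)). subst; lra.
assert (x k < x (S k)) by (apply hx; lia). assert (x j <= x k) by (apply IHk; lia). lra. Qed.

Lemma find_cell (N : nat) (x : nat -> R) s : (forall k : nat, (1 <= k < N)%nat -> x k < x (S k)) ->
  x 1%nat <= s ->
  forall m, (1 <= m <= N - 1)%nat -> s <= x (S m) -> exists i, (1 <= i <= m)%nat /\ x i <= s <= x (S i).
Proof. intros hx hs m. induction m; intros hm hsm. lia.
destruct (Nat.eq_dec m 0). subst. exists 1%nat. split. lia. lra.
destruct (Rle_dec (x (S m)) s). exists (S m). split. lia. lra.
destruct (IHm ltac:(lia) ltac:(lra)) as [i [hi1 hi2]]. exists i. split. lia. auto. Qed.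

Lemma cover (N : nat) (x : nat -> R) (a b : nat -> R) s : (2 <= N)%nat ->
  (forall k : nat, (1 <= k < N)%nat -> x k < x (S k)) ->
  (forall i : nat, (1 <= i <= N - 1)%nat -> a i * x 1%nat + b i = x i /\ a i * x N + b i = x (S i)) ->
  inI (x 1%nat) (x N) s ->
  exists i t, (1 <= i <= N - 1)%nat /\ inI (x 1%nat) (x N) t /\ s = a i * t + b i.
Proof. intros hN hx hab [hs1 hs2].
assert (SN : x (S (N - 1)) = x N) by (f_equal; lia).
destruct (find_cell N x s hx hs1 (N - 1) ltac:(lia) ltac:(rewrite SN; lra)) as [i [hi [h1 h2]]].
exists i, ((s - b i) / a i).
destruct (hab i ltac:(lia)) as [e1 e2].
assert (x1N : x 1%nat < x N). { assert (x 1%nat < x 2%nat) by (apply hx; lia).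
  assert (x 2%nat <= x N) by (apply (xmono N x hx); lia). lra. }
assert (xi : x i < x (S i)) by (apply hx; lia).
assert (ha : 0 < a i) by nra.
split; [lia|split].
- unfold inI. split.
  + apply Rmult_le_reg_l with (a i); auto. unfold Rdiv. replace (a i * ((s - b i) * / a i)) with (s - b i) by (field; lra). lra.
  + apply Rmult_le_reg_l with (a i); auto. unfold Rdiv. replace (a i * ((s - b i) * / a i)) with (s - b i) by (field; lra). lra.
- field. lra.
Qed.


Lemma x1N (N : nat) (x : nat -> R) : (2 <= N)%nat -> (forall k : nat, (1 <= k < N)%nat -> x k < x (S k)) ->
  x 1%nat < x N.
Proof. intros hN hx. assert (x 1%nat < x 2%nat) by (apply hx; lia).
  assert (x 2%nat <= x N) by (apply (xmono N x hx); lia). lra. Qed.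

Lemma small_pow c0 D e : 0 <= c0 < 1 -> 0 <= D -> 0 < e -> exists k, c0 ^ k * D < e.
Proof. intros hc hD he.
assert (0 < e / (D + 1)) by (apply Rdiv_lt_0_compat; lra).
destruct (pow_lt_1_zero c0 ltac:(rewrite Rabs_pos_eq; lra) _ H) as [k hk].
exists k. specialize (hk k ltac:(lia)). rewrite Rabs_pos_eq in hk by (apply pow_le; lra).
assert (c0 ^ k * (D + 1) < e).
{ apply Rmult_lt_reg_r with (/ (D + 1)). apply Rinv_0_lt_compat; lra.
  replace (c0 ^ k * (D + 1) * / (D + 1)) with (c0 ^ k) by (field; lra). exact hk. }
pose proof (pow_le c0 k (proj1 hc)). nra. Qed.

Lemma conv_part (N : nat) (x : nat -> R) (a b : nat -> R) (alpha : nat -> R -> R)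
  (h : R -> R) (qs : nat -> R) (Fs : nat -> R -> R) (c : R) :
  (2 <= N)%nat ->
  (forall k : nat, (1 <= k < N)%nat -> x k < x (S k)) ->
  (forall i : nat, (1 <= i <= N - 1)%nat -> a i * x 1%nat + b i = x i /\ a i * x N + b i = x (S i)) ->
  cont_on (x 1%nat) (x N) h ->
  (forall n, 0 < qs n <= 1) -> is_lim_seq qs 1 ->
  c < 1 -> (forall i t, (1 <= i <= N - 1)%nat -> inI (x 1%nat) (x N) t -> Rabs (alpha i t) <= c) ->
  (forall n, (1 <= n)%nat -> is_qMKZ_fractal x N a b alpha n (qs n) h (Fs n)) ->
  forall eps, 0 < eps -> exists n0 : nat, forall n, (n0 <= n)%nat -> (1 <= n)%nat ->
     forall t, inI (x 1%nat) (x N) t -> Rabs (Fs n t - h t) < eps.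
Proof. intros hN hx hab hh hq hql hc hal hF eps he.
pose proof (x1N N x hN hx) as hI.
set (x1 := x 1%nat) in *. set (xN := x N) in *.
destruct (cont_bounded x1 xN h ltac:(lra) hh) as [Bh hBh].
pose proof (cont_unif x1 xN h ltac:(lra) hh) as huc.
set (c0 := Rmax c 0).
assert (hc0 : 0 <= c0 < 1) by (split; [apply Rmax_r| apply Rmax_lub_lt; lra]).
assert (hal0 : forall i t, (1 <= i <= N - 1)%nat -> inI x1 xN t -> Rabs (alpha i t) <= c0).
{ intros. eapply Rle_trans. apply hal; auto. apply Rmax_l. }
set (eta := eps * (1 - c0) / 2).
assert (heta : 0 < eta) by (unfold eta; apply Rdiv_lt_0_compat; nra).
destruct (MKZ_korovkin x1 xN h Bh hI hBh huc (eta / 2) ltac:(lra)) as [K [hK hkor]].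
destruct (qint_grow qs hq hql (2 * K / eta)) as [n0 hn0].
exists n0. intros n hn hn1.
assert (hM : forall t, inI x1 xN t -> Rabs (h t - MKZ x1 xN n (qs n) h t) <= eta).
{ intros t ht. rewrite Rabs_minus_sym. eapply Rle_trans. apply hkor; auto.
  specialize (hn0 n hn). pose proof (qint_ge1 (qs n) n (proj1 (hq n))).
  assert (K / qint (qs n) (S n) <= eta / 2).
  { apply Rmult_le_reg_r with (qint (qs n) (S n)). lra. unfold Rdiv. rewrite Rmult_assoc, Rinv_l by lra.
    assert (2 * K * / eta * eta = 2 * K) by (field; lra).
    assert (2 * K * / eta * eta <= qint (qs n) (S n) * eta) by (apply Rmult_le_compat_r; lra). nra. }
  lra. }
destruct (hF n hn1) as [hFc hFeq].
destruct (cont_bounded x1 xN (Fs n) ltac:(lra) hFc) as [BF hBF].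
set (D := BF + Bh).
assert (hD : 0 <= D). { unfold D. assert (x1 <= x1 <= xN) by lra.
  pose proof (hBF x1 H). pose proof (hBh x1 H). pose proof (Rabs_pos (Fs n x1)). pose proof (Rabs_pos (h x1)). lra. }
set (W := eta * c0 / (1 - c0)).
assert (hW : 0 <= W) by (unfold W; apply Rdiv_le_0_compat; nra).
assert (claim : forall k s, inI x1 xN s -> Rabs (Fs n s - h s) <= c0 ^ k * D + W).
{ induction k; intros s hs.
  - simpl. unfold D. eapply Rle_trans. unfold Rminus. apply Rabs_triang. rewrite Rabs_Ropp.
    pose proof (hBF s hs). pose proof (hBh s hs). lra.
  - destruct (cover N x a b s hN hx hab hs) as [i [t [hi [ht ->]]]].
    rewrite (hFeq i t hi ht).
    replace (h (a i * t + b i) + alpha i t * (Fs n t - MKZ (x 1%nat) (x N) n (qs n) h t) - h (a i * t + b i))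
      with (alpha i t * ((Fs n t - h t) + (h t - MKZ x1 xN n (qs n) h t))) by (unfold x1, xN; ring).
    rewrite Rabs_mult.
    assert (Rabs ((Fs n t - h t) + (h t - MKZ x1 xN n (qs n) h t)) <= c0 ^ k * D + W + eta).
    { eapply Rle_trans. apply Rabs_triang. pose proof (IHk t ht). pose proof (hM t ht). lra. }
    eapply Rle_trans. apply Rmult_le_compat. apply Rabs_pos. apply Rabs_pos. apply hal0; eauto. exact H.
    replace (c0 * (c0 ^ k * D + W + eta)) with (c0 ^ S k * D + W). lra.
    unfold W. simpl. field. lra. }
destruct (small_pow c0 D (eps / 2) hc0 hD ltac:(lra)) as [k hk].
intros t ht. eapply Rle_lt_trans. apply (claim k t ht).
assert (W < eps / 2). { unfold W, eta. replace (eps * (1 - c0) / 2 * c0 / (1 - c0)) with (eps * c0 / 2) by (field; lra). nra. }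
lra.
Qed.


Lemma u_in (N : nat) (x : nat -> R) (a b : nat -> R) i s : (2 <= N)%nat ->
  (forall k : nat, (1 <= k < N)%nat -> x k < x (S k)) ->
  (forall i : nat, (1 <= i <= N - 1)%nat -> a i * x 1%nat + b i = x i /\ a i * x N + b i = x (S i)) ->
  (1 <= i <= N - 1)%nat -> inI (x 1%nat) (x N) s -> inI (x 1%nat) (x N) (a i * s + b i).
Proof. intros hN hx hab hi [h1 h2].
destruct (hab i hi) as [e1 e2].
pose proof (x1N N x hN hx).
assert (xi : x i < x (S i)) by (apply hx; lia).
assert (ha : 0 < a i) by nra.
assert (x 1%nat <= x i) by (apply (xmono N x hx); lia).
assert (x (S i) <= x N) by (apply (xmono N x hx); lia).
split; nra. Qed.

Lemma order_part (N : nat) (x : nat -> R) (a b : nat -> R) (alpha : nat -> R -> R)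
  (f g : R -> R) (qs : nat -> R) (F G : nat -> R -> R) (c : R) :
  (2 <= N)%nat ->
  (forall k : nat, (1 <= k < N)%nat -> x k < x (S k)) ->
  (forall i : nat, (1 <= i <= N - 1)%nat ->
     a i * x 1%nat + b i = x i /\ a i * x N + b i = x (S i)) ->
  cont_on (x 1%nat) (x N) f ->
  cont_on (x 1%nat) (x N) g ->
  (forall t, inI (x 1%nat) (x N) t -> g t <= f t) ->
  (forall n, 0 < qs n <= 1) ->
  c < 1 -> (forall i t, (1 <= i <= N - 1)%nat -> inI (x 1%nat) (x N) t -> Rabs (alpha i t) <= c) ->
  (forall (n i : nat) (t : R), (1 <= n)%nat -> (1 <= i <= N - 1)%nat ->
     inI (x 1%nat) (x N) t ->
     0 <= alpha i t /\
     alpha i t <= Rmin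
       (minI (x 1%nat) (x N) (fun s => f (a i * s + b i) - g (a i * s + b i))
        / maxI (x 1%nat) (x N) (MKZ (x 1%nat) (x N) n (qs n) (fun s => f s - g s)))
       1) ->
  (forall n, (1 <= n)%nat -> is_qMKZ_fractal x N a b alpha n (qs n) f (F n)) ->
  (forall n, (1 <= n)%nat -> is_qMKZ_fractal x N a b alpha n (qs n) g (G n)) ->
  (forall n, (1 <= n)%nat -> forall t, inI (x 1%nat) (x N) t -> G n t <= F n t).
Proof. intros hN hx hab hf hg hfg hq hc hal hcond hF hG n hn.
pose proof (x1N N x hN hx) as hI.
set (x1 := x 1%nat) in *. set (xN := x N) in *.
destruct (cont_bounded x1 xN f ltac:(lra) hf) as [Bf hBf].
destruct (cont_bounded x1 xN g ltac:(lra) hg) as [Bg hBg].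
destruct (hF n hn) as [hFc hFeq]. destruct (hG n hn) as [hGc hGeq].
destruct (cont_bounded x1 xN (F n) ltac:(lra) hFc) as [BF hBF].
destruct (cont_bounded x1 xN (G n) ltac:(lra) hGc) as [BG hBG].
set (c0 := Rmax c 0).
assert (hc0 : 0 <= c0 < 1) by (split; [apply Rmax_r| apply Rmax_lub_lt; lra]).
set (q := qs n) in *.
set (Hd := fun s => F n s - G n s).
assert (key : forall i t, (1 <= i <= N - 1)%nat -> inI x1 xN t ->
   alpha i t * Hd t <= Hd (a i * t + b i)).
{ intros i t hi ht. unfold Hd. rewrite (hFeq i t hi ht), (hGeq i t hi ht).
  fold x1 xN. fold q.
  assert (lin : MKZ x1 xN n q f t - MKZ x1 xN n q g t = MKZ x1 xN n q (fun s => f s - g s) t).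
  { apply (MKZ_minus x1 xN n q f g Bf Bg t hI (hq n) hn ht hBf hBg). }
  destruct (hcond n i t hn hi ht) as [a0 a1]. fold x1 xN q in a1.
  set (phi := minI x1 xN (fun s => f (a i * s + b i) - g (a i * s + b i))) in *.
  set (Phi := maxI x1 xN (MKZ x1 xN n q (fun s => f s - g s))) in *.
  set (Mt := MKZ x1 xN n q (fun s => f s - g s) t) in *.
  assert (hphi : 0 <= phi <= f (a i * t + b i) - g (a i * t + b i)).
  { apply (minI_props x1 xN (fun s => f (a i * s + b i) - g (a i * s + b i)) t ht). intros s hs. pose proof (hfg _ (u_in N x a b i s hN hx hab hi hs)). lra. }
  assert (hPhi : Mt <= Phi).
  { apply (maxI_ge x1 xN (MKZ x1 xN n q (fun s => f s - g s)) t (Bf + Bg) ht). intros s hs.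
    eapply Rle_trans. apply Rle_abs. apply (MKZ_bound x1 xN n q _ (Bf+Bg) s hI (hq n) hn hs).
    intros u hu. eapply Rle_trans. unfold Rminus. apply Rabs_triang. rewrite Rabs_Ropp.
    pose proof (hBf u hu). pose proof (hBg u hu). lra. }
  assert (a2 : alpha i t <= phi / Phi) by (eapply Rle_trans; [exact a1| apply Rmin_l]).
  assert (alpha i t * Mt <= phi).
  { destruct (Rle_dec Mt 0). nra.
    assert (0 < Phi) by lra.
    assert (alpha i t * Mt <= alpha i t * Phi) by (apply Rmult_le_compat_l; lra).
    assert (alpha i t * Phi <= phi / Phi * Phi) by (apply Rmult_le_compat_r; lra).
    replace (phi / Phi * Phi) with phi in H1 by (field; lra). lra. }
  replace (f (a i * t + b i) + alpha i t * (F n t - MKZ x1 xN n q f t) -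
     (g (a i * t + b i) + alpha i t * (G n t - MKZ x1 xN n q g t)))
   with (f (a i * t + b i) - g (a i * t + b i) - alpha i t * (MKZ x1 xN n q f t - MKZ x1 xN n q g t)
         + alpha i t * (F n t - G n t)) by ring.
  rewrite lin. fold Mt. lra. }
set (D := BF + BG).
assert (hD : 0 <= D). { unfold D. assert (x1 <= x1 <= xN) by lra.
  pose proof (hBF x1 H). pose proof (hBG x1 H). pose proof (Rabs_pos (F n x1)). pose proof (Rabs_pos (G n x1)). lra. }
assert (claim : forall k s, inI x1 xN s -> - (c0 ^ k * D) <= Hd s).
{ induction k; intros s hs.
  - simpl. unfold D, Hd. pose proof (hBF s hs). pose proof (hBG s hs).
    pose proof (Rabs_maj2 (F n s)). pose proof (Rle_abs (G n s)). lra.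
  - destruct (cover N x a b s hN hx hab hs) as [i [t [hi [ht ->]]]].
    pose proof (key i t hi ht). pose proof (IHk t ht).
    destruct (hcond n i t hn hi ht) as [a0 _].
    assert (alpha i t <= c0). { eapply Rle_trans. apply Rle_abs. eapply Rle_trans. apply hal; auto. apply Rmax_l. }
    pose proof (pow_le c0 k (proj1 hc0)).
    assert (0 <= c0 ^ k * D) by nra.
    assert (alpha i t * (- (c0 ^ k * D)) <= alpha i t * Hd t) by (apply Rmult_le_compat_l; lra).
    assert (- (c0 ^ S k * D) <= alpha i t * (- (c0 ^ k * D))). { simpl. nra. }
    lra. }
intros t ht. destruct (Rle_dec (G n t) (F n t)) as [l|l]; auto. exfalso.
assert (Hd t < 0) by (unfold Hd; lra).
destruct (small_pow c0 D (- Hd t) hc0 hD ltac:(lra)) as [k hk].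
pose proof (claim k t ht). lra.
Qed.

Theorem corollary4p1
  (N : nat) (x : nat -> R) (a b : nat -> R) (alpha : nat -> R -> R)
  (f g : R -> R) (qs : nat -> R)
  (F G : nat -> R -> R) :
  (2 <= N)%nat ->
  (forall k : nat, (1 <= k < N)%nat -> x k < x (S k)) ->
  (forall i : nat, (1 <= i <= N - 1)%nat ->
     a i * x 1%nat + b i = x i /\ a i * x N + b i = x (S i)) ->
  cont_on (x 1%nat) (x N) f ->
  cont_on (x 1%nat) (x N) g ->
  (forall t, inI (x 1%nat) (x N) t -> g t <= f t) ->
  (forall n, 0 < qs n <= 1) ->
  is_lim_seq qs 1 ->
  (forall i : nat, (1 <= i <= N - 1)%nat -> cont_on (x 1%nat) (x N) (alpha i)) ->
  (* ||alpha||_oo < 1 *)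
  (exists c, c < 1 /\ forall i t, (1 <= i <= N - 1)%nat -> inI (x 1%nat) (x N) t ->
       Rabs (alpha i t) <= c) ->
  (forall (n i : nat) (t : R), (1 <= n)%nat -> (1 <= i <= N - 1)%nat ->
     inI (x 1%nat) (x N) t ->
     0 <= alpha i t /\
     alpha i t <= Rmin
       (minI (x 1%nat) (x N) (fun s => f (a i * s + b i) - g (a i * s + b i))
        / maxI (x 1%nat) (x N) (MKZ (x 1%nat) (x N) n (qs n) (fun s => f s - g s)))
       1) ->
  (forall n, (1 <= n)%nat -> is_qMKZ_fractal x N a b alpha n (qs n) f (F n)) ->
  (forall n, (1 <= n)%nat -> is_qMKZ_fractal x N a b alpha n (qs n) g (G n)) ->
  (forall eps, 0 < eps -> exists n0 : nat, forall n, (n0 <= n)%nat -> (1 <= n)%nat ->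
     forall t, inI (x 1%nat) (x N) t -> Rabs (F n t - f t) < eps) /\
  (forall eps, 0 < eps -> exists n0 : nat, forall n, (n0 <= n)%nat -> (1 <= n)%nat ->
     forall t, inI (x 1%nat) (x N) t -> Rabs (G n t - g t) < eps) /\
  (forall n, (1 <= n)%nat -> forall t, inI (x 1%nat) (x N) t -> G n t <= F n t).
Proof.
intros hN hx hab hf hg hfg hq hql hac [c [hc hal]] hcond hF hG.
split; [|split].
- exact (conv_part N x a b alpha f qs F c hN hx hab hf hq hql hc hal hF).
- exact (conv_part N x a b alpha g qs G c hN hx hab hg hq hql hc hal hG).
- exact (order_part N x a b alpha f g qs F G c hN hx hab hf hg hfg hq hc hal hcond hF hG).
Qed.
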